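(* Let $\bm{\lambda}=\{\bm{\lambda}_k\}_{k\in\mathcal{K}}$, $\beta>0$ and $\epsilon>0$ be given. Suppose the ADMM iterates $\{\bm{x}_0^t,\{\bm{x}_k^t,(\bm{x}_k^{\text{base}})^t\}_{k\in\mathcal{K}},\{\bm{z}_k^t\}_{k\in\mathcal{K}}\}_{t\in\mathbb{N}}$ satisfy: (descent in base case update) $\bm{x}_0^{t+1}$ is a stationary point of the $\bm{x}_0$-subproblem and $f_0(\bm{x}_0^{t+1})+\sum_{k\in\mathcal{K}}\big(\langle\bm{y}_k^t,\bm{x}_0^{t+1}\rangle+\tfrac{\rho}{2}\|\bm{x}_0^{t+1}-(\bm{x}_k^{\text{base}})^t+\bm{z}_k^t\|^2\big)\le f_0(\bm{x}_0^{t})+\sum_{k\in\mathcal{K}}\big(\langle\bm{y}_k^t,\bm{x}_0^{t}\rangle+\tfrac{\rho}{2}\|\bm{x}_0^{t}-(\bm{x}_k^{\text{base}})^t+\bm{z}_k^t\|^2\big)$; (descent in contingency update) there is $\gamma>0$ such that for all $k\in\mathcal{K}$, $(\bm{x}_k^{t+1},(\bm{x}_k^{\text{base}})^{t+1})$ is a stationary point of the $k$-th contingency subproblem and $f_k(\bm{x}_k^{t+1})-\langle\bm{y}_k^t,(\bm{x}_k^{\text{base}})^{t+1}\rangle+\tfrac{\rho}{2}\|\bm{x}_0^{t+1}-(\bm{x}_k^{\text{base}})^{t+1}+\bm{z}_k^t\|^2\le f_k(\bm{x}_k^{t})-\langle\bm{y}_k^t,(\bm{x}_k^{\text{base}})^{t}\rangle+\tfrac{\rho}{2}\|\bm{x}_0^{t+1}-(\bm{x}_k^{\text{base}})^{t}+\bm{z}_k^t\|^2-\gamma\beta\|(\bm{x}_k^{\text{base}})^{t+1}-(\bm{x}_k^{\text{base}})^{t}\|^2$.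 Then ADMM finds an $\epsilon$-stationary solution of the augmented Lagrangian relaxation problem (in the sense defined in the context) in at most $$T\le\left\lceil\frac{2\rho^2|\mathcal{K}|\,(\overline{L}(\bm{\lambda},\beta)-\underline{L}(\bm{\lambda},\beta))}{\min\{\gamma\beta,(\beta+\rho)/2-\beta^2/\rho\}}\cdot\frac{1}{\epsilon^2}\right\rceil$$ iterations, where $\overline{L}(\bm{\lambda},\beta):=f_0(\bm{x}_0^0)+\sum_{k\in\mathcal{K}}\big(f_k(\bm{x}_k^0)+\langle\bm{\lambda}_k,\bm{z}_k^0\rangle+\tfrac{\beta}{2}\|\bm{z}_k^0\|^2\big)+\sum_{k\in\mathcal{K}}\big(\langle\bm{y}_k^0,\bm{x}_0^0-(\bm{x}_k^{\text{base}})^0+\bm{z}_k^0\rangle+\tfrac{\rho}{2}\|\bm{x}_0^0-(\bm{x}_k^{\text{base}})^0+\bm{z}_k^0\|^2\big)$ and $\underline{L}(\bm{\lambda},\beta):=\min\{\sum_{g\in\mathcal{G}}c_g(p_{g0}):p_{g0}\in[\underline{p}_g,\overline{p}_g]\ \forall g\in\mathcal{G}\}-\|\bm{\lambda}\|^2/\beta$.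
   Context: Setting (smoothed two-stage SC-ACOPF): $\mathcal{G}$ is the set of generators, $\mathcal{K}$ the set of contingencies; $\bm{x}_0$ collects base case variables, $\bm{x}_k$ the variables of contingency $k$, and $\bm{x}_k^{\text{base}}$ is contingency $k$'s copy of $\bm{x}_0$. $X_0$ is the (closed) base case feasible set and $X_k$ the (closed, approximated) feasible set of $(\bm{x}_k,\bm{x}_k^{\text{base}})$. The costs are $f_0(\bm{x}_0)=\sum_{g\in\mathcal{G}}c_g(p_{g0})+\delta c_0^\sigma$ and $f_k(\bm{x}_k)=(1-\delta)\frac{1}{|\mathcal{K}|}c_k^\sigma$, where each $c_g$ is a convex piecewise linear increasing generation cost of base case active power $p_{g0}\in[\underline{p}_g,\overline{p}_g]$ and $c_k^\sigma\ge 0$ is a penalty cost (sum of convex piecewise linear increasing functions of nonnegative slack variables). Augmented Lagrangian relaxation (ALR) problem: minimize $f_0(\bm{x}_0)+\sum_{k\in\mathcal{K}}\big(f_k(\bm{x}_k)+\langle\bm{\lambda}_k,\bm{z}_k\rangle+\frac{\beta}{2}\|\bm{z}_k\|^2\big)$ subject to $\bm{x}_0-\bm{x}_k^{\text{base}}+\bm{z}_k=0$, $\bm{x}_0\in X_0$, $(\bm{x}_k,\bm{x}_k^{\text{base}})\in X_k$ for all $k\in\mathcal{K}$. ADMM is run with penalty $\rho=\tau\beta$, $\tau>1$, $\beta>1$, starting from $\bm{x}_0^0\in X_0$, $(\bm{x}_k^0,(\bm{x}_k^{\text{base}})^0)\in X_k$ and $(\bm{z}_k^0,\bm{y}_k^0)$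 with $\bm{\lambda}_k+\beta\bm{z}_k^0+\bm{y}_k^0=0$, and updates $\bm{x}_0^{t+1}=\operatorname{argmin}_{\bm{x}_0\in X_0} f_0(\bm{x}_0)+\sum_{k}\big(\langle\bm{y}_k^t,\bm{x}_0\rangle+\frac{\rho}{2}\|\bm{x}_0-(\bm{x}_k^{\text{base}})^t+\bm{z}_k^t\|^2\big)$; $(\bm{x}_k^{t+1},(\bm{x}_k^{\text{base}})^{t+1})=\operatorname{argmin}_{(\bm{x}_k,\bm{x}_k^{\text{base}})\in X_k} f_k(\bm{x}_k)-\langle\bm{y}_k^t,\bm{x}_k^{\text{base}}\rangle+\frac{\rho}{2}\|\bm{x}_0^{t+1}-\bm{x}_k^{\text{base}}+\bm{z}_k^t\|^2$; $\bm{z}_k^{t+1}=\frac{1}{\beta+\rho}\big(\rho((\bm{x}_k^{\text{base}})^{t+1}-\bm{x}_0^{t+1})-\bm{\lambda}_k-\bm{y}_k^t\big)$; $\bm{y}_k^{t+1}=\bm{y}_k^t+\rho(\bm{x}_0^{t+1}-(\bm{x}_k^{\text{base}})^{t+1}+\bm{z}_k^{t+1})$. $\epsilon$-stationarity for the ALR problem: $(\bm{x}_0,\{\bm{x}_k,\bm{x}_k^{\text{base}}\},\{\bm{z}_k\})$ is $\epsilon$-stationary if there exist $\{\bm{y}_k\}$, $\bm{d}_0\in\partial f_0(\bm{x}_0)+\sum_k\bm{y}_k+\mathcal{N}_{X_0}(\bm{x}_0)$, and $\bm{d}_k\in[\tilde{\nabla}f_k(\bm{x}_k);-\bm{y}_k]+\mathcal{N}_{X_k}(\bm{x}_k,\bm{x}_k^{\text{base}})$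 with $\tilde{\nabla}f_k(\bm{x}_k)\in\partial f_k(\bm{x}_k)$, such that $0=\bm{\lambda}_k+\beta\bm{z}_k+\bm{y}_k$ for all $k$, and with $\bm{s}_k:=\bm{x}_0-\bm{x}_k^{\text{base}}+\bm{z}_k$ we have $\max\{\|\bm{d}_0\|,\|\bm{d}_k\|,\|\bm{s}_k\|:k\in\mathcal{K}\}\le\epsilon$. Here $\partial$ is the general (limiting) subdifferential and $\mathcal{N}$ the general normal cone of variational analysis. *)

(* Defs.v *)
From HB Require Import structures.
From mathcomp Require Import all_boot all_order all_algebra.
From mathcomp Require Import all_classical all_reals all_analysis.
Set Implicit Arguments. Unset Strict Implicit. Unset Printing Implicit Defensive.
Import Order.TTheory GRing.Theory Num.Theory.
Local Open Scope classical_set_scope.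
Local Open Scope ring_scope.

Section Defs.
Variable R : realType.

Definition vec (n : nat) := 'I_n -> R.

Definition vdot n (u v : vec n) : R := \sum_(i < n) u i * v i.
Definition vnorm n (u : vec n) : R := Num.sqrt (vdot u u).
Definition vadd n (u v : vec n) : vec n := fun i => u i + v i.
Definition vsub n (u v : vec n) : vec n := fun i => u i - v i.
Definition vopp n (u : vec n) : vec n := fun i => - u i.
Definition vscale n (a : R) (u : vec n) : vec n := fun i => a * u i.
Definition vzero n : vec n := fun _ => 0.
Definition vcat m n (x : vec m) (y : vec n) : vec (m + n) :=
  fun i => match fintype.split i with inl a => x a | inr b => y b end.

Definition vconv n (xs : nat -> vec n) (x : vec n) : Prop :=
  forall e, 0 < e -> exists N, forall j, (N <= j)%N -> vnorm (vsub (xs j) x) <= e.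
Definition rconv (us : nat -> R) (u : R) : Prop :=
  forall e, 0 < e -> exists N, forall j, (N <= j)%N -> `|us j - u| <= e.

Definition vclosed n (C : set (vec n)) : Prop :=
  forall (xs : nat -> vec n) x, (forall j, C (xs j)) -> vconv xs x -> C x.

(* Regular (Frechet) normal cone, Rockafellar-Wets Def. 6.3 *)
Definition reg_normal n (C : set (vec n)) (x : vec n) : set (vec n) :=
  [set v | C x /\ forall e, 0 < e -> exists2 d, 0 < d &
      forall y, C y -> vnorm (vsub y x) <= d ->
        vdot v (vsub y x) <= e * vnorm (vsub y x)].
(* General (limiting) normal cone, Rockafellar-Wets Def. 6.3 *)
Definition normal_cone n (C : set (vec n)) (x : vec n) : set (vec n) :=
  [set v | C x /\ exists (xs vs : nat -> vec n),
      (forall j, C (xs j)) /\ vconv xs x /\ vconv vs v /\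
      (forall j, reg_normal C (xs j) (vs j))].

(* Regular (Frechet) subdifferential, Rockafellar-Wets Def. 8.3 *)
Definition reg_subdiff n (f : vec n -> R) (x : vec n) : set (vec n) :=
  [set v | forall e, 0 < e -> exists2 d, 0 < d &
      forall y, vnorm (vsub y x) <= d ->
        f x + vdot v (vsub y x) - e * vnorm (vsub y x) <= f y].
(* General (limiting) subdifferential, Rockafellar-Wets Def. 8.3 *)
Definition subdiff n (f : vec n -> R) (x : vec n) : set (vec n) :=
  [set v | exists (xs vs : nat -> vec n),
      vconv xs x /\ rconv (fun j => f (xs j)) (f x) /\ vconv vs v /\
      (forall j, reg_subdiff f (xs j) (vs j))].

Definition cvx_pwl_incr (c : R -> R) : Prop :=
  (exists s : seq (R * R), s != [::] /\
     forall p, (forall ab, ab \in s -> ab.1 * p + ab.2 <= c p) /\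
               (exists2 ab, ab \in s & c p = ab.1 * p + ab.2)) /\
  (forall p q, p <= q -> c p <= c q).

(* Cost functions.
   f_0(x_0) = sum_g c_g(p_{g0}) + delta * c_0^sigma(x_0),
   where p_{g0} = x_0 (pidx g);
   f_k(x_k) = (1 - delta) / |K| * c_k^sigma(x_k). *)
Definition f0 (G : finType) n0 (pidx : G -> 'I_n0) (c : G -> R -> R)
  (delta : R) (c0s : vec n0 -> R) (x0 : vec n0) : R :=
  \sum_(g : G) c g (x0 (pidx g)) + delta * c0s x0.

Definition fk (K : finType) m (delta : R) (cks : vec m -> R) (xk : vec m) : R :=
  (1 - delta) * (#|K|%:R)^-1 * cks xk.

Definition gen_min (G : finType) (c : G -> R -> R) (pl pu : G -> R) : R :=
  inf [set \sum_(g : G) c g (p g) | p in [set p : G -> R | forall g, pl g <= p g <= pu g]].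

(* First-order stationarity of the x_0-subproblem
     min_{x in X0} F0(x) + sum_k (<y_k, x> + rho/2 ||x - xb_k + z_k||^2):
   0 in dF0(x) + sum_k (y_k + rho (x - xb_k + z_k)) + N_{X0}(x). *)
Definition sub0_stationary (K : finType) n0 (F0 : vec n0 -> R) (X0 : set (vec n0))
  (y xb z : K -> vec n0) (rho : R) (x : vec n0) : Prop :=
  exists2 g, subdiff F0 x g & exists2 nv, normal_cone X0 x nv &
    forall i, g i + \sum_(k : K) (y k i + rho * (x i - xb k i + z k i)) + nv i = 0.

(* First-order stationarity of the k-th contingency subproblem
     min_{(u, w) in Xk} Fk(u) - <y_k, w> + rho/2 ||x0 - w + z_k||^2:
   0 in [dFk(u); -y_k - rho (x0 - w + z_k)] + N_{Xk}(u, w). *)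
Definition subk_stationary m n0 (Fk : vec m -> R) (Xk : set (vec (m + n0)))
  (yk zk x0 : vec n0) (rho : R) (u : vec m) (w : vec n0) : Prop :=
  exists2 g, subdiff Fk u g & exists2 nv, normal_cone Xk (vcat u w) nv &
    forall i, vcat g (fun j => - yk j - rho * (x0 j - w j + zk j)) i + nv i = 0.

Definition eps_stationary (G K : finType) n0 (m : K -> nat)
  (pidx : G -> 'I_n0) (c : G -> R -> R) (delta : R)
  (c0s : vec n0 -> R) (cks : forall k, vec (m k) -> R)
  (X0 : set (vec n0)) (Xk : forall k, set (vec (m k + n0)))
  (lam : K -> vec n0) (beta eps : R)
  (x0 : vec n0) (xk : forall k, vec (m k)) (xb z : K -> vec n0) : Prop :=
  exists (y : K -> vec n0),
    [/\ (forall k i, lam k i + beta * z k i + y k i = 0),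
     (exists2 g0, subdiff (f0 pidx c delta c0s) x0 g0 &
       exists2 nv0, normal_cone X0 x0 nv0 &
         vnorm (fun i => g0 i + \sum_(k : K) y k i + nv0 i) <= eps),
     (forall k, exists2 gk, subdiff (fk K delta (cks k)) (xk k) gk &
       exists2 nvk, normal_cone (Xk k) (vcat (xk k) (xb k)) nvk &
         vnorm (fun i => vcat gk (vopp (y k)) i + nvk i) <= eps) &
     (forall k, vnorm (fun i => x0 i - xb k i + z k i) <= eps)].

Definition L_upper (G K : finType) n0 (m : K -> nat)
  (pidx : G -> 'I_n0) (c : G -> R -> R) (delta : R)
  (c0s : vec n0 -> R) (cks : forall k, vec (m k) -> R)
  (lam : K -> vec n0) (beta rho : R)
  (x0 : vec n0) (xk : forall k, vec (m k)) (xb z y : K -> vec n0) : R :=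
  f0 pidx c delta c0s x0
  + \sum_(k : K) (fk K delta (cks k) (xk k) + vdot (lam k) (z k)
                  + beta / 2 * vnorm (z k) ^+ 2)
  + \sum_(k : K) (vdot (y k) (fun i => x0 i - xb k i + z k i)
                  + rho / 2 * vnorm (fun i => x0 i - xb k i + z k i) ^+ 2).

Definition L_lower (G K : finType) n0 (c : G -> R -> R) (pl pu : G -> R)
  (lam : K -> vec n0) (beta : R) : R :=
  gen_min c pl pu - (\sum_(k : K) vnorm (lam k) ^+ 2) / beta.

End Defs.

(* Main.v *)
Require Import Defs.
From HB Require Import structures.
From mathcomp Require Import all_boot all_order all_algebra.
From mathcomp Require Import all_classical all_reals all_analysis.
From mathcomp Require Import ring lra.
Import Order.TTheory GRing.Theory Num.Theory.
Local Open Scope classical_set_scope.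
Local Open Scope ring_scope.

Lemma vdot_ge0 (R : realType) n (u : vec R n) : 0 <= vdot u u.
Proof. by rewrite /vdot; apply: sumr_ge0 => i _; rewrite -expr2 sqr_ge0. Qed.

Arguments vdot_ge0 {R n}.

Lemma vnorm2 (R : realType) n (u : vec R n) : vnorm u ^+ 2 = vdot u u.
Proof. by rewrite /vnorm sqr_sqrtr // vdot_ge0. Qed.

Lemma vnorm_le (R : realType) n (u : vec R n) e :
  0 <= e -> vdot u u <= e ^+ 2 -> vnorm u <= e.
Proof.
move=> he hu; rewrite /vnorm -(ger0_norm he) -sqrtr_sqr ler_sqrt //.
exact: sqr_ge0.
Qed.

Lemma sum_sqr_le (R : realType) (K : finType) (a : K -> R) :
  (\sum_k a k) ^+ 2 <= #|K|%:R * \sum_k a k ^+ 2.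
Proof.
have h : 0 <= \sum_k \sum_j (a k - a j) ^+ 2.
  by apply: sumr_ge0 => k _; apply: sumr_ge0 => j _; exact: sqr_ge0.
have e : \sum_k \sum_j (a k - a j) ^+ 2 =
   2 * (#|K|%:R * \sum_k a k ^+ 2) - 2 * (\sum_k a k) ^+ 2.
  rewrite (eq_bigr (fun k => a k ^+ 2 * #|K|%:R - 2 * a k * \sum_j a j
                              + \sum_j a j ^+ 2)); last first.
    move=> k _.
    rewrite (eq_bigr (fun j => a k ^+ 2 - 2 * a k * a j + a j ^+ 2)); last first.
      by move=> j _; ring.
    rewrite !big_split /= sumrN sumr_const mulr_natr -mulr_sumr.
    done.
  rewrite !big_split /= sumrN sumr_const -!mulr_suml -mulr_sumr -mulr_natr.
  rewrite -/(#|K|). ring.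
lra.
Qed.

Lemma low_coord (R : realFieldType) (beta rho l zz s yy : R) :
  0 < beta -> beta < rho -> yy = - l - beta * zz ->
  0 <= l * zz + beta / 2 * (zz * zz) + (yy * s + rho / 2 * (s * s)) + l * l / beta.
Proof.
move=> b0 br ->.
have bn : beta != 0 by apply/eqP => h; move: b0; rewrite h ltxx.
have -> : l * zz + beta / 2 * (zz * zz) + ((- l - beta * zz) * s + rho / 2 * (s * s))
   + l * l / beta = (l + beta * (zz - s)) ^+ 2 / (2 * beta) + l ^+ 2 / (2 * beta)
   + (rho - beta) / 2 * s ^+ 2 by field.
have b2 : 0 <= 2 * beta by lra.
apply: addr_ge0; first apply: addr_ge0.
- by apply: divr_ge0 => //; exact: sqr_ge0.
- by apply: divr_ge0 => //; exact: sqr_ge0.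
- apply: mulr_ge0; last exact: sqr_ge0. apply: divr_ge0; lra.
Qed.

Lemma desc_coord (R : realFieldType) (beta rho l z z' y y' a b : R) :
  beta + rho != 0 -> rho != 0 -> y = - l - beta * z -> y' = - l - beta * z' ->
  z' = (beta + rho)^-1 * (rho * (b - a) - l - y) ->
  l * z' + beta / 2 * (z' * z') + (y' * (a - b + z') + rho / 2 * ((a - b + z') * (a - b + z')))
  - (l * z + beta / 2 * (z * z) + y * z + y * a - y * b
     + rho / 2 * ((a - b + z) * (a - b + z))
     - ((beta + rho) / 2 - beta ^+ 2 / rho) * ((z' - z) * (z' - z))) = 0.
Proof.
move=> h1 h2 hy hy' hz'; rewrite hy' hz' hy; field; rewrite ?h1 ?h2 //.
Qed.


Theorem theorem1 (R : realType) (G K : finType) (n0 : nat) (m : K -> nat)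
  (pidx : G -> 'I_n0) (c : G -> R -> R) (pl pu : G -> R) (delta : R)
  (c0s : vec R n0 -> R) (cks : forall k, vec R (m k) -> R)
  (X0 : set (vec R n0)) (Xk : forall k, set (vec R (m k + n0)))
  (lam : K -> vec R n0) (beta tau rho eps gamma : R)
  (x0 : nat -> vec R n0) (xk : nat -> forall k, vec R (m k))
  (xb z y : nat -> K -> vec R n0) :
  (* standing assumptions on the model *)
  (forall g, cvx_pwl_incr (c g)) ->
  (forall g, pl g <= pu g) ->
  0 <= delta <= 1 ->
  vclosed X0 -> (forall k, vclosed (Xk k)) ->
  (forall x, X0 x -> forall g, pl g <= x (pidx g) <= pu g) ->
  (forall x, X0 x -> 0 <= c0s x) ->
  (forall k x w, Xk k (vcat x w) -> 0 <= cks k x) ->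
  (* parameters *)
  1 < tau -> 1 < beta -> rho = tau * beta -> 0 < eps ->
  (* initialization *)
  X0 (x0 0%N) -> (forall k, Xk k (vcat (xk 0%N k) (xb 0%N k))) ->
  (forall k i, lam k i + beta * z 0%N k i + y 0%N k i = 0) ->
  (* z- and y-updates *)
  (forall t k i, z t.+1 k i =
     (beta + rho)^-1 * (rho * (xb t.+1 k i - x0 t.+1 i) - lam k i - y t k i)) ->
  (forall t k i, y t.+1 k i = y t k i + rho * (x0 t.+1 i - xb t.+1 k i + z t.+1 k i)) ->
  (* descent in base case update *)
  (forall t,
     sub0_stationary (f0 pidx c delta c0s) X0 (y t) (xb t) (z t) rho (x0 t.+1) /\
     f0 pidx c delta c0s (x0 t.+1)
       + \sum_(k : K) (vdot (y t k) (x0 t.+1)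
                       + rho / 2 * vnorm (fun i => x0 t.+1 i - xb t k i + z t k i) ^+ 2)
     <= f0 pidx c delta c0s (x0 t)
       + \sum_(k : K) (vdot (y t k) (x0 t)
                       + rho / 2 * vnorm (fun i => x0 t i - xb t k i + z t k i) ^+ 2)) ->
  (* descent in contingency update *)
  0 < gamma ->
  (forall t k,
     subk_stationary (fk K delta (cks k)) (Xk k) (y t k) (z t k) (x0 t.+1) rho
       (xk t.+1 k) (xb t.+1 k) /\
     fk K delta (cks k) (xk t.+1 k) - vdot (y t k) (xb t.+1 k)
       + rho / 2 * vnorm (fun i => x0 t.+1 i - xb t.+1 k i + z t k i) ^+ 2
     <= fk K delta (cks k) (xk t k) - vdot (y t k) (xb t k)
       + rho / 2 * vnorm (fun i => x0 t.+1 i - xb t k i + z t k i) ^+ 2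
       - gamma * beta * vnorm (fun i => xb t.+1 k i - xb t k i) ^+ 2) ->
  (* conclusion: an eps-stationary iterate within the iteration bound *)
  exists t : nat,
    [/\ (1 <= t)%N,
        (t%:Z <= Num.max 1 (Num.ceil
           (2 * rho ^+ 2 * #|K|%:R
              * (L_upper pidx c delta c0s cks lam beta rho
                   (x0 0%N) (xk 0%N) (xb 0%N) (z 0%N) (y 0%N)
                 - L_lower c pl pu lam beta)
            / Num.min (gamma * beta) ((beta + rho) / 2 - beta ^+ 2 / rho)
            / eps ^+ 2)))%R &
        eps_stationary pidx c delta c0s cks X0 Xk lam beta eps
          (x0 t) (xk t) (xb t) (z t)].
Proof.
move=> Hc Hplu /andP[Hd0 Hd1] _ _ HX0b Hc0 Hck Htau Hbeta Hrho Heps HX00 HXk0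
  Hy0 Hz Hy H0 Hgam Hk.
have b0 : 0 < beta by apply: lt_trans Hbeta.
have r1 : 1 < rho by rewrite Hrho; nra.
have r0 : 0 < rho by lra.
have br : beta < rho by rewrite Hrho; nra.
have brn : beta + rho != 0 by apply/eqP => h; lra.
have rn : rho != 0 by apply/eqP => h; lra.
have bn : beta != 0 by apply/eqP => h; lra.
have yrel : forall t k i, y t k i = - lam k i - beta * z t k i.
  elim=> [|t IH] k i; first by have := Hy0 k i; lra.
  rewrite Hy !Hz IH; field => //.
have srel : forall t k i, x0 t.+1 i - xb t.+1 k i + z t.+1 k i =
    beta / rho * (z t k i - z t.+1 k i).
  move=> t k i; rewrite !Hz yrel; field; rewrite ?rn ?brn //.
have HX0 : forall t, X0 (x0 t).
  case=> // t; case: (H0 t) => [[g _ [nv Hn _]] _]; by case: Hn.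
have HXk : forall t k, Xk k (vcat (xk t k) (xb t k)).
  case=> // t k; case: (Hk t k) => [[g _ [nv Hn _]] _]; by case: Hn.
pose E t k := fk K delta (cks k) (xk t k) + vdot (lam k) (z t k)
                  + beta / 2 * vnorm (z t k) ^+ 2 +
              (vdot (y t k) (fun i => x0 t i - xb t k i + z t k i)
                  + rho / 2 * vnorm (fun i => x0 t i - xb t k i + z t k i) ^+ 2).
pose Ly t := f0 pidx c delta c0s (x0 t) + \sum_k E t k.
have LU : L_upper pidx c delta c0s cks lam beta rho (x0 0%N) (xk 0%N) (xb 0%N)
    (z 0%N) (y 0%N) = Ly 0%N.
  by rewrite /Ly /E big_split /L_upper addrA.
have Efk : forall t k, 0 <= fk K delta (cks k) (xk t k).
  move=> t k; rewrite /fk; apply: mulr_ge0; last exact: (Hck k _ (xb t k) (HXk t k)).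
  apply: mulr_ge0; first lra.
  by rewrite invr_ge0 ler0n.
have Elow : forall t k, - (vnorm (lam k) ^+ 2 / beta) <= E t k.
  move=> t k.
  have e : 0 <= \sum_i (lam k i * z t k i + beta / 2 * (z t k i * z t k i)
     + (y t k i * (x0 t i - xb t k i + z t k i) + rho / 2 *
        ((x0 t i - xb t k i + z t k i) * (x0 t i - xb t k i + z t k i)))
     + lam k i * lam k i / beta).
    by apply: sumr_ge0 => i _; apply: low_coord => //; exact: yrel.
  rewrite !big_split /= -!mulr_sumr -mulr_suml in e.
  have := Efk t k.
  rewrite /E !vnorm2 /vdot /=. lra.
have LL : forall t, L_lower c pl pu lam beta <= Ly t.
  move=> t; rewrite /L_lower /Ly.
  have f0low : gen_min c pl pu <= f0 pidx c delta c0s (x0 t).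
    rewrite /gen_min /f0.
    set S := [set _ | _ in _].
    have hlb : has_lbound S.
      exists (\sum_g c g (pl g)) => _ [p hp <-].
      apply: ler_sum => g _; case/andP: (hp g) => h1 _; exact: (Hc g).2.
    have hin : S (\sum_g c g (x0 t (pidx g))).
      by exists (fun g => x0 t (pidx g)) => // g; exact: HX0b.
    have := ge_inf hlb hin.
    have : 0 <= delta * c0s (x0 t) by apply: mulr_ge0 => //; exact: Hc0.
    lra.
  have hE : \sum_k - (vnorm (lam k) ^+ 2 / beta) <= \sum_k E t k.
    by apply: ler_sum => k _; exact: Elow.
  rewrite sumrN -mulr_suml in hE.
  lra.
pose M2 := (beta + rho) / 2 - beta ^+ 2 / rho.
pose M := Num.min (gamma * beta) M2.
pose dxb t k := fun i => xb t.+1 k i - xb t k i.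
pose dz t k := fun i => z t.+1 k i - z t k i.
pose D t := \sum_k (vdot (dxb t k) (dxb t k) + vdot (dz t k) (dz t k)).
have M2pos : 0 < M2.
  have : beta ^+ 2 / rho < beta by rewrite ltr_pdivrMr // expr2 ltr_pM2l.
  rewrite /M2; lra.
have Mpos : 0 < M by rewrite /M lt_min M2pos andbT mulr_gt0.
have I2 : forall t k,
  vdot (lam k) (z t.+1 k) + beta / 2 * vnorm (z t.+1 k) ^+ 2
  + (vdot (y t.+1 k) (fun i => x0 t.+1 i - xb t.+1 k i + z t.+1 k i)
     + rho / 2 * vnorm (fun i => x0 t.+1 i - xb t.+1 k i + z t.+1 k i) ^+ 2)
  = vdot (lam k) (z t k) + beta / 2 * vnorm (z t k) ^+ 2 + vdot (y t k) (z t k)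
    + vdot (y t k) (x0 t.+1) - vdot (y t k) (xb t.+1 k)
    + rho / 2 * vnorm (fun i => x0 t.+1 i - xb t.+1 k i + z t k i) ^+ 2
    - M2 * vnorm (fun i => z t.+1 k i - z t k i) ^+ 2.
  move=> t k.
  have e := @big1 R 0 +%R 'I_n0 (index_enum _) xpredT _
    (fun i _ => @desc_coord R beta rho _ _ _ _ _ _ _ brn rn (yrel t k i) (yrel t.+1 k i) (Hz t k i)).
  rewrite !(big_split, sumrN) /= -!mulr_sumr in e.
  rewrite !vnorm2 /vdot /M2 /=. lra.
have PK : forall t k,
  E t.+1 k + gamma * beta * vnorm (fun i => xb t.+1 k i - xb t k i) ^+ 2
    + M2 * vnorm (fun i => z t.+1 k i - z t k i) ^+ 2
    + (vdot (y t k) (x0 t) + rho / 2 * vnorm (fun i => x0 t i - xb t k i + z t k i) ^+ 2)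
  <= E t k + (vdot (y t k) (x0 t.+1)
      + rho / 2 * vnorm (fun i => x0 t.+1 i - xb t k i + z t k i) ^+ 2).
  move=> t k.
  have := (Hk t k).2. have := I2 t k.
  have : vdot (y t k) (fun i => x0 t i - xb t k i + z t k i) =
      vdot (y t k) (x0 t) - vdot (y t k) (xb t k) + vdot (y t k) (z t k).
    by rewrite /vdot -sumrB -big_split; apply: eq_bigr => i _ /=; ring.
  rewrite /E. lra.
have desc : forall t, Ly t.+1 + M * D t <= Ly t.
  move=> t.
  have hs := @ler_sum R K (index_enum K) xpredT _ _ (fun k _ => PK t k).
  rewrite !big_split /= in hs.
  have h0 := (H0 t).2.
  have hM : M * D t <= \sum_k gamma * beta * vnorm (fun i => xb t.+1 k i - xb t k i) ^+ 2
      + \sum_k M2 * vnorm (fun i => z t.+1 k i - z t k i) ^+ 2.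
    rewrite /D mulr_sumr -big_split; apply: ler_sum => k _; rewrite mulrDr !vnorm2.
    apply: lerD; apply: ler_wpM2r; rewrite ?vdot_ge0 //.
      by rewrite /M ge_min lexx.
    by rewrite /M ge_min lexx orbT.
  rewrite /Ly /E !big_split /= in h0 *. lra.
have tele : forall T, Ly T + M * \sum_(0 <= t < T) D t <= Ly 0%N.
  elim=> [|T IH]; first by rewrite big_geq // mulr0 addr0.
  rewrite big_nat_recr //= mulrDr. have := desc T. lra.
have D0 : forall t, 0 <= D t.
  by move=> t; apply: sumr_ge0 => k _; apply: addr_ge0; exact: vdot_ge0.
set DL := L_upper pidx c delta c0s cks lam beta rho
   (x0 0%N) (xk 0%N) (xb 0%N) (z 0%N) (y 0%N) - L_lower c pl pu lam beta.
set Q := 2 * rho ^+ 2 * #|K|%:R * DL / Num.min (gamma * beta) ((beta + rho) / 2 - beta ^+ 2 / rho) / eps ^+ 2.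
set Tz := Num.max 1 (Num.ceil Q).
have Tz0 : 0 <= Tz by rewrite /Tz le_max ler01.
pose T := `|Tz|%N.
have TzE : (T%:Z) = Tz by rewrite /T gez0_abs.
have T1 : (0 < T)%N by rewrite -(@lez_nat 1) TzE /Tz le_max lexx.
have QT : Q <= T%:R.
  have -> : (T%:R : R) = Tz%:~R by rewrite -TzE pmulrn.
  apply: le_trans (ceil_ge Q) _; by rewrite ler_int /Tz le_max lexx orbT.
set A := 2 * rho ^+ 2 * #|K|%:R.
have A0 : 0 <= A by rewrite /A; apply: mulr_ge0; [apply: mulr_ge0; [lra | exact: sqr_ge0] | exact: ler0n].
have [t [tT hD]] : exists t, (t < T)%N /\ A * D t <= eps ^+ 2.
  case: (pselect (exists t, (t < T)%N /\ A * D t <= eps ^+ 2)) => // hn.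
  exfalso.
  have ht : forall t, (0 <= t < T)%N -> eps ^+ 2 < A * D t.
    move=> t /andP[_ tT]; rewrite ltNge; apply/negP => h; apply: hn; by exists t.
  have hsum : \sum_(0 <= t < T) eps ^+ 2 < \sum_(0 <= t < T) (A * D t).
    exact: ltr_sum_nat.
  rewrite sumr_const_nat subn0 -mulr_sumr -mulr_natr in hsum.
  have tl := tele T; have ll := LL T. rewrite -LU in tl.
  have Mn : M != 0 by apply/eqP => h; lra.
  have en : eps != 0 by apply/eqP => h; lra.
  set S := \sum_(0 <= t < T) D t in hsum tl.
  have h1 : Q * (M * eps ^+ 2) = A * DL.
    by rewrite /Q -/M2 -/M /A; field; rewrite en Mn.
  have Me : 0 <= M * eps ^+ 2 by rewrite mulr_ge0 // ?sqr_ge0 // ltW.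
  have h2 : Q * (M * eps ^+ 2) <= T%:R * (M * eps ^+ 2) by rewrite ler_wpM2r.
  have h3 : eps ^+ 2 * T%:R * M < A * S * M by rewrite ltr_pM2r.
  have h4 : A * (M * S) <= A * DL.
    apply: ler_wpM2l => //; rewrite /DL; lra.
  lra.
exists t.+1; split => //.
  by rewrite -TzE lez_nat.
have hdz : forall k, rho ^+ 2 * vdot (dz t k) (dz t k) <= eps ^+ 2.
  move=> k.
  have kK : (0 < #|K|)%N by apply/card_gt0P; exists k.
  have K1 : 1 <= #|K|%:R :> R by rewrite ler1n.
  have h1 : vdot (dz t k) (dz t k) <= D t.
    rewrite /D (bigD1 k) //=.
    have := vdot_ge0 (dxb t k).
    have : 0 <= \sum_(j | j != k) (vdot (dxb t j) (dxb t j) + vdot (dz t j) (dz t j)).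
      by apply: sumr_ge0 => j _; apply: addr_ge0; exact: vdot_ge0.
    lra.
  have r2 : 0 <= rho ^+ 2 by exact: sqr_ge0.
  have h2 : rho ^+ 2 * vdot (dz t k) (dz t k) <= rho ^+ 2 * D t by rewrite ler_wpM2l.
  have h3 : 0 <= (2 * #|K|%:R - 1) * (rho ^+ 2 * D t).
    by apply: mulr_ge0; [lra | apply: mulr_ge0].
  rewrite /A in hD. lra.
exists (y t.+1); split.
- by move=> k i; rewrite yrel; lra.
- case: (H0 t).1 => g hg [nv hnv hsum]; exists g => //; exists nv => //.
  apply: vnorm_le; first lra.
  have vE : forall i, g i + \sum_k y t.+1 k i + nv i =
      rho * \sum_k (dz t k i - dxb t k i).
    move=> i; have := hsum i.
    have e : \sum_k y t.+1 k i = \sum_k (y t k i + rho * (x0 t.+1 i - xb t k i + z t k i))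
        + rho * \sum_k (dz t k i - dxb t k i).
      rewrite mulr_sumr -big_split; apply: eq_bigr => k _ /=; rewrite Hy /dz /dxb; ring.
    rewrite e; lra.
  apply: (@le_trans _ _ (\sum_(i < n0) rho ^+ 2 * (#|K|%:R * \sum_k (dz t k i - dxb t k i) ^+ 2))).
    rewrite /vdot; apply: ler_sum => i _ /=; rewrite vE -expr2 exprMn.
    by apply: ler_wpM2l; [exact: sqr_ge0 | exact: sum_sqr_le].
  apply: le_trans hD.
  apply: (@le_trans _ _ (\sum_(i < n0) rho ^+ 2 * (#|K|%:R * \sum_k 2 * (dxb t k i * dxb t k i + dz t k i * dz t k i)))).
    apply: ler_sum => i _; apply: ler_wpM2l; first exact: sqr_ge0.
    apply: ler_wpM2l; first exact: ler0n.
    apply: ler_sum => k _.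
    have := sqr_ge0 (dz t k i + dxb t k i). nra.
  have -> : D t = \sum_(i < n0) \sum_k (dxb t k i * dxb t k i + dz t k i * dz t k i).
    by rewrite /D /vdot [RHS]exchange_big /=; apply: eq_bigr => k _; rewrite big_split.
  rewrite mulr_sumr; apply: ler_sum => i _; rewrite -mulr_sumr /A. lra.
- move=> k; case: (Hk t k).1 => gk hgk [nvk hnvk hsk]; exists gk => //; exists nvk => //.
  apply: vnorm_le; first lra.
  have sl : forall a : 'I_(m k), fintype.split (lshift n0 a) = inl a.
    by move=> a; exact: (unsplitK (inl a)).
  have sr : forall b : 'I_n0, fintype.split (rshift (m k) b) = inr b.
    by move=> b; exact: (unsplitK (inr b)).
  rewrite /vdot big_split_ord /= big1 ?add0r; last first.
    move=> a _; have := hsk (lshift n0 a); rewrite /vcat !sl => ->; by rewrite mul0r.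
  rewrite (eq_bigr (fun b => rho ^+ 2 * (dz t k b * dz t k b))); last first.
    move=> b _; have := hsk (rshift (m k) b); rewrite /vcat /vopp !sr Hy /dz => h.
    have -> : nvk (rshift (m k) b) = y t k b + rho * (x0 t.+1 b - xb t.+1 k b + z t k b) by lra.
    ring.
  by rewrite -mulr_sumr; exact: hdz.
- move=> k; apply: vnorm_le; first lra.
  rewrite /vdot (eq_bigr (fun i => (beta / rho) ^+ 2 * (dz t k i * dz t k i))); last first.
    by move=> i _ /=; rewrite srel /dz; ring.
  rewrite -mulr_sumr; apply: le_trans (hdz k); apply: ler_wpM2r; first exact: vdot_ge0.
  have q1 : beta / rho < 1 by rewrite ltr_pdivrMr // mul1r.
  have q0 : 0 < beta / rho by rewrite divr_gt0.
  nra.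
Qed.
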